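(* Let $H,H'$ be heaps, $a$ an address, $v$ a value and $\tau$ an ownership well-formed type. If $H\approx_a H'$ and $\mathrm{own}(H,v,\tau)(a)=0$, then $\mathrm{own}(H,v,\tau)=\mathrm{own}(H',v,\tau)$.
   Context: Types $\tau ::= \{\nu:\mathtt{int}\mid\varphi\}\mid\tau\ \mathtt{ref}^r$, $\varphi$ a refinement formula, $r\in[0,1]$ rational. $\top_0=\{\nu:\mathtt{int}\mid\top\}$ and $\top_i=\top_{i-1}\ \mathtt{ref}^0$. A type is ownership well-formed if every subterm of the form $\tau'\ \mathtt{ref}^0$ has $\tau'=\top_n$ for some $n$ (the paper imposes this on all types). Values: integers or addresses; a heap is a finite partial map from addresses to values. Reachability $H\vdash v\Downarrow n$ is the smallest relation with: $v\in\mathbb Z$ implies $H\vdash v\Downarrow 0$; if $H\vdash v\Downarrow n$ and $H(a)=v$ then $H\vdash a\Downarrow n+1$. $H\approx_a H'$ iff $dom(H)=dom(H')$, $H(a')=H'(a')$ for all $a'\in dom(H)$ with $a'\neq a$, and for every $n$, $H\vdash a\Downarrow n$ iff $H'\vdash a\Downarrow n$. Ownership maps are functions from addresses to nonnegative rationals, added pointwise; $\{a\mapsto r\}$ maps $a$ to $r$ and all else to 0; $\emptyset$ is the zero map. $\mathrm{own}(H,v,\tau)=\{a\mapsto r\}+\mathrm{own}(H,H(a),\tau')$ if $v$ is an address $a\in dom(H)$ and $\tau=\tau'\ \mathtt{ref}^r$; otherwise $\emptyset$. *)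

(* Defs.v *)
From mathcomp Require Import all_boot all_order all_algebra.
Set Implicit Arguments. Unset Strict Implicit. Unset Printing Implicit Defensive.
Import Order.TTheory GRing.Theory Num.Theory.
Local Open Scope ring_scope.

Definition addr := nat.
Inductive value := VInt of int | VAddr of addr.

Definition heap := addr -> option value.
Definition heap_finite (H : heap) : Prop :=
  exists N : nat, forall a : addr, (N <= a)%N -> H a = None.
Definition in_dom (H : heap) (a : addr) : Prop := H a <> None.

(* Types, parameterized by the type [form] of refinement formulas. *)
Inductive typ (form : Type) :=
| TInt of form
| TRef of typ form & rat.
Arguments TInt {form}.
Arguments TRef {form}.

(* top_n, given the formula "true" [ftop] *)
Fixpoint top_n (form : Type) (ftop : form) (n : nat) : typ form :=
  match n with
  | O => TInt ftop
  | S m => TRef (top_n ftop m) 0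
  end.

Fixpoint typ_ok (form : Type) (t : typ form) : Prop :=
  match t with
  | TInt _ => True
  | TRef t' r => 0 <= r <= 1 /\ typ_ok t'
  end.

Fixpoint own_wf (form : Type) (ftop : form) (t : typ form) : Prop :=
  match t with
  | TInt _ => True
  | TRef t' r => (r = 0 -> exists n, t' = top_n ftop n) /\ own_wf ftop t'
  end.

Inductive reach (H : heap) : value -> nat -> Prop :=
| reach_int : forall z : int, reach H (VInt z) 0
| reach_addr : forall (a : addr) (v : value) (n : nat),
    reach H v n -> H a = Some v -> reach H (VAddr a) n.+1.

Definition heap_approx (a : addr) (H H' : heap) : Prop :=
  (forall a', in_dom H a' <-> in_dom H' a') /\
  (forall a', in_dom H a' -> a' <> a -> H a' = H' a') /\
  (forall n, reach H (VAddr a) n <-> reach H' (VAddr a) n).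

Definition omap := addr -> rat.
Definition omap0 : omap := fun _ => 0.
Definition omap1 (a : addr) (r : rat) : omap := fun a' => if a' == a then r else 0.
Definition omap_add (m1 m2 : omap) : omap := fun a' => m1 a' + m2 a'.

Fixpoint own (form : Type) (H : heap) (v : value) (t : typ form) : omap :=
  match t, v with
  | TRef t' r, VAddr a =>
      match H a with
      | Some w => omap_add (omap1 a r) (own H w t')
      | None => omap0
      end
  | _, _ => omap0
  end.

(* Main.v *)
Require Import Defs.
From mathcomp Require Import all_boot all_order all_algebra.
From Stdlib Require Import FunctionalExtensionality.
Import Order.TTheory GRing.Theory Num.Theory.
Local Open Scope ring_scope.

Lemma own_ge0 (form : Type) (H : heap) (t : typ form) :
  typ_ok t -> forall v b, 0 <= own H v t b.
Proof.
elim: t => [f|t' IH r] /= ok v b; first by [].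
case: v => [z|c] //=; case: (H c) => [w|] //=.
case: ok => /andP[r0 _] okt.
rewrite /omap_add /omap1; apply: addr_ge0; last exact: IH.
by case: (b == c).
Qed.

Lemma own_top (form : Type) (ftop : form) (H : heap) n v :
  own H v (top_n ftop n) = omap0.
Proof.
elim: n v => [|n IH] v /=; first by case: v.
case: v => [z|c] //=; case: (H c) => [w|] //=.
rewrite IH; apply: functional_extensionality => b.
by rewrite /omap_add /omap1 /omap0; case: (b == c); rewrite addr0.
Qed.

Theorem lemma19 (form : Type) (ftop : form) (H H' : heap) (a : addr)
  (v : value) (t : typ form) :
  heap_finite H -> heap_finite H' -> typ_ok t -> own_wf ftop t ->
  heap_approx a H H' ->
  own H v t a = 0%R ->
  own H v t = own H' v t.
Proof.
move=> _ _ ok wf [Hdom [Heq _]].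
elim: t ok wf v => [f|t' IH r] ok wf v /=; first by [].
case: v => [z|b] //=.
case: ok => /andP[r0 r1] okt; case: wf => wfr wft.
case Hb: (H b) => [w|]; last first.
  case H'b: (H' b) => [w'|] //.
  exfalso; have: in_dom H' b by rewrite /in_dom H'b.
  by move/Hdom; rewrite /in_dom Hb.
move=> h0.
have ge1 : 0 <= omap1 b r a by rewrite /omap1; case: (a == b).
have ge2 := @own_ge0 form H t' okt w a.
have [e1 e2] : omap1 b r a = 0 /\ own H w t' a = 0.
  move: h0; rewrite /omap_add => h0.
  have e1 : omap1 b r a = 0.
    apply/eqP; rewrite eq_le ge1 andbT -h0 lerDl //.
  by split=> //; move: h0; rewrite e1 add0r.
have indH : in_dom H b by rewrite /in_dom Hb.
case: (eqVneq b a) => [eba|nba].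
  subst b; move: e1; rewrite /omap1 eqxx => r0'.
  have [n tn] := wfr r0'; subst t'.
  case H'a: (H' a) => [w'|]; last first.
    by move/Hdom: indH; rewrite /in_dom H'a.
  by rewrite !own_top.
rewrite -(Heq b indH (fun e => negP nba (introT eqP e))) Hb.
by rewrite (IH okt wft w e2).
Qed.
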